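(* Let $x>0$ and $v\ge0$. Then $\delta(x,v)\ge h(x,v)$, where $$h(x,v)=\begin{cases}\dfrac{12x}{\pi^2(v+\sqrt v+1)}, & 0<x\le\frac{\pi^3}{12}(v+\sqrt v+1),\\[2mm] 2\pi-\Big[\dfrac{\pi^8(v+\sqrt v+1)}{12x}\Big]^{1/5}, & \frac{\pi^3}{12}(v+\sqrt v+1)\le x<\infty.\end{cases}$$
   Context: For $v\ge0$ and $0<|\delta|<2\pi$ let $f(v,\delta)=\frac{(v+1)(\delta-\sin\delta)+2\sqrt v(2\sin\frac\delta2-\delta\cos\frac\delta2)}{2\sin^2\frac\delta2}$ (nonnegative square root), and $f(v,0)=0$. For $x\in\mathbb{R}$, $v\ge0$, $\delta(x,v)$ denotes the unique $\delta\in(-2\pi,2\pi)$ with $f(v,\delta)=x$. *)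

(* Defs.v *)
From Stdlib Require Import Reals Lra ClassicalEpsilon.
Open Scope R_scope.

Definition f (v d : R) : R :=
  if Req_EM_T d 0 then 0
  else ((v + 1) * (d - sin d)
        + 2 * sqrt v * (2 * sin (d / 2) - d * cos (d / 2)))
       / (2 * (sin (d / 2)) ^ 2).

(* delta(x,v): the (unique) d in (-2pi,2pi) with f(v,d) = x, chosen by
   Hilbert's epsilon; when such a d exists, delta x v is one. *)
Definition delta (x v : R) : R :=
  epsilon (inhabits 0) (fun d => -2 * PI < d < 2 * PI /\ f v d = x).

Definition h (x v : R) : R :=
  let s := v + sqrt v + 1 in
  if Rle_dec x (PI ^ 3 / 12 * s) then 12 * x / (PI ^ 2 * s)
  else 2 * PI - Rpower (PI ^ 8 * s / (12 * x)) (1 / 5).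

(* Main.v *)
Require Import Defs.
From Stdlib Require Import Reals Lra Psatz ClassicalEpsilon.
From Stdlib Require Ranalysis5.
Import Defs.
Open Scope R_scope.
Lemma sinlb (a : R) : sin_lb a = a - a^3/6 + a^5/120 - a^7/5040.
Proof. unfold sin_lb, sin_approx, sin_term. simpl. field. Qed.
Lemma sin2 (a : R) : sin_approx a (2*(0+1)) = a - a^3/6 + a^5/120.
Proof. unfold sin_approx, sin_term. simpl. field. Qed.
Lemma coslb (a : R) : cos_lb a = 1 - a^2/2 + a^4/24 - a^6/720.
Proof. unfold cos_lb, cos_approx, cos_term. simpl. field. Qed.
Lemma cosub (a : R) : cos_ub a = 1 - a^2/2 + a^4/24 - a^6/720 + a^8/40320.
Proof. unfold cos_ub, cos_approx, cos_term. cbn [sum_f_R0 Nat.mul Nat.add].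
  rewrite !fact_simpl, !mult_INR. simpl INR. simpl pow. field. Qed.

Lemma PI_lo : 313/100 <= PI.
Proof.
  destruct (Rle_lt_dec (313/100) PI) as [H|H]; auto.
  pose proof PI_RGT_0.
  assert (C := proj1 (COS (PI/2) ltac:(lra) ltac:(lra))). rewrite cos_PI2, coslb in C.
  assert (0 < PI/2 < 313/200) by lra.
  revert C H1. generalize (PI/2). intros a C Ha. exfalso.
  assert (0 <= a^2 <= (313/200)^2) by (split; nra).
  revert C H1. replace (a^4) with ((a^2)^2) by field. replace (a^6) with ((a^2)^3) by field.
  generalize (a^2). intros s C Hs. nra.
Qed.
Lemma PI_hi : PI <= 315/100.
Proof.
  destruct (Rle_lt_dec PI (315/100)) as [H|H]; auto.
  pose proof PI_RGT_0. pose proof PI_4.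
  assert (C := proj2 (COS (PI/2) ltac:(lra) ltac:(lra))). rewrite cos_PI2, cosub in C.
  assert (315/200 < PI/2 <= 2) by lra.
  revert C H2. generalize (PI/2). intros a C Ha. exfalso.
  assert ((315/200)^2 <= a^2 <= 4) by (split; nra).
  revert C H2. replace (a^4) with ((a^2)^2) by field. replace (a^6) with ((a^2)^3) by field.
  replace (a^8) with ((a^2)^4) by field.
  generalize (a^2). intros s C Hs. nra.
Qed.

Lemma PI2b : 979/100 <= PI^2.
Proof. pose proof PI_lo. nra. Qed.
Lemma PI8b : 9200 <= PI^8.
Proof. pose proof PI_lo. apply Rle_trans with ((313/100)^8). lra.
  apply pow_incr. lra. Qed.

Lemma sin_le_id (x : R) : 0 <= x -> sin x <= x.
Proof. intros [H|H]. apply Rlt_le, sin_lt_x; auto. subst; rewrite sin_0; lra. Qed.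

Lemma P1 (s : R) : 0 <= s <= 2481/1000 -> 3*(4/3 - 4*s/15 + 128*s^2/5040) <= 979/100 * (1 - s/6)^2.
Proof. intros. nra. Qed.
Lemma P2 (s : R) : 0 <= s <= 2481/1000 -> 12*(1/3 - s/30 + s^2/720) <= 979/100 * (1 - s/6)^2.
Proof. intros. nra. Qed.
Lemma P3 (s : R) : 0 <= s <= 2481/1000 -> 0 <= 1/3 - s/30 + s^2*(1/720 - 1/5040) - s^3/40320.
Proof. intros. nra. Qed.
Lemma P4 (w : R) : 0 <= w <= 1575/1000 -> 192*(945/100 - 4*w)*w^3 <= 9000*(1 - w^2/6)^2.
Proof. intros. nra. Qed.

Lemma sin_ge_cubic (t : R) : 0 <= t <= PI/2 -> t - t^3/6 <= sin t.
Proof. intros. pose proof PI_hi. pose proof PI_RGT_0.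
  pose proof (proj1 (SIN t ltac:(lra) ltac:(lra))) as HS1. rewrite sinlb in HS1.
  assert (t^2 <= 2481/1000) by nra.
  assert (0 <= t^5/120 - t^7/5040).
  { replace (t^5/120 - t^7/5040) with (t^5 * (1/120 - t^2/5040)) by field.
    apply Rmult_le_pos. apply pow_le; lra. lra. }
  lra.
Qed.

Lemma T1 (t : R) : 0 < t <= PI/2 -> 3*(2*t - sin(2*t)) <= PI^2*t*(sin t)^2.
Proof. intros. pose proof PI_hi. pose proof PI_RGT_0. pose proof PI2b.
  pose proof (proj1 (SIN (2*t) ltac:(lra) ltac:(lra))) as HS1. rewrite sinlb in HS1.
  pose proof (sin_ge_cubic t ltac:(lra)).
  assert (Hs : 0 <= t^2 <= 2481/1000) by (split; nra).
  assert (0 <= t - t^3/6) by nra.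
  assert ((t - t^3/6)^2 <= (sin t)^2) by (apply pow_incr; lra).
  apply Rle_trans with (t^3 * (3*(4/3 - 4*t^2/15 + 128*(t^2)^2/5040))).
  { replace (t^3 * (3*(4/3 - 4*t^2/15 + 128*(t^2)^2/5040))) with
      (3*(2*t - ((2*t) - (2*t)^3/6 + (2*t)^5/120 - (2*t)^7/5040))) by field. lra. }
  apply Rle_trans with (t^3 * (979/100 * (1 - t^2/6)^2)).
  { apply Rmult_le_compat_l. apply pow_le; lra. apply P1; auto. }
  replace (t^3 * (979/100 * (1 - t^2/6)^2)) with (979/100 * t * (t - t^3/6)^2) by field.
  apply Rmult_le_compat. nra. nra. apply Rmult_le_compat_r; lra. auto.
Qed.

Lemma T2 (t : R) : 0 < t <= PI/2 -> 12*(sin t - t*cos t) <= PI^2*t*(sin t)^2.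
Proof. intros. pose proof PI_hi. pose proof PI_RGT_0. pose proof PI2b.
  pose proof (proj2 (sin_bound t 0 ltac:(lra) ltac:(lra))) as HS1. rewrite sin2 in HS1.
  pose proof (proj1 (COS t ltac:(lra) ltac:(lra))) as HS2. rewrite coslb in HS2.
  pose proof (sin_ge_cubic t ltac:(lra)).
  assert (Hs : 0 <= t^2 <= 2481/1000) by (split; nra).
  assert (0 <= t - t^3/6) by nra.
  assert ((t - t^3/6)^2 <= (sin t)^2) by (apply pow_incr; lra).
  apply Rle_trans with (t^3 * (12*(1/3 - t^2/30 + (t^2)^2/720))).
  { replace (t^3 * (12*(1/3 - t^2/30 + (t^2)^2/720))) with
      (12*((t - t^3/6 + t^5/120) - t*(1 - t^2/2 + t^4/24 - t^6/720))) by field.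
    apply Rmult_le_compat_l. lra.
    assert (t * (1 - t^2/2 + t^4/24 - t^6/720) <= t * cos t) by (apply Rmult_le_compat_l; lra).
    lra. }
  apply Rle_trans with (t^3 * (979/100 * (1 - t^2/6)^2)).
  { apply Rmult_le_compat_l. apply pow_le; lra. apply P2; auto. }
  replace (t^3 * (979/100 * (1 - t^2/6)^2)) with (979/100 * t * (t - t^3/6)^2) by field.
  apply Rmult_le_compat. nra. nra. apply Rmult_le_compat_r; lra. auto.
Qed.

Lemma T3 (t : R) : 0 < t <= PI/2 -> t*cos t <= sin t.
Proof. intros. pose proof PI_hi. pose proof PI_RGT_0.
  pose proof (proj1 (SIN t ltac:(lra) ltac:(lra))) as HS1. rewrite sinlb in HS1.
  pose proof (proj2 (COS t ltac:(lra) ltac:(lra))) as HS2. rewrite cosub in HS2.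
  assert (Hs : 0 <= t^2 <= 2481/1000) by (split; nra).
  pose proof (P3 _ Hs).
  assert (t * cos t <= t * (1 - t^2/2 + t^4/24 - t^6/720 + t^8/40320)) by (apply Rmult_le_compat_l; lra).
  assert (HH: 0 <= t^3 * (1/3 - t^2/30 + (t^2)^2*(1/720 - 1/5040) - (t^2)^3/40320))
    by (apply Rmult_le_pos; [apply pow_le; lra| auto]).
  revert HH. 
  replace (t^3 * (1/3 - t^2/30 + (t^2)^2*(1/720 - 1/5040) - (t^2)^3/40320)) with
    ((t - t^3/6 + t^5/120 - t^7/5040) - t * (1 - t^2/2 + t^4/24 - t^6/720 + t^8/40320)) by field.
  lra.
Qed.

Lemma T3' (t : R) : 0 < t < PI -> t*cos t <= sin t.
Proof. intros. destruct (Rle_lt_dec t (PI/2)). apply T3; lra.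
  pose proof (cos_le_0 t ltac:(lra) ltac:(lra)). pose proof (sin_ge_0 t ltac:(lra) ltac:(lra)).
  nra. Qed.

Lemma T4 (w : R) : 0 < w < PI/2 -> 192*(2*PI - 2*w + sin(2*w))*w^5 <= PI^8*(sin w)^2.
Proof. intros. pose proof PI_hi. pose proof PI_RGT_0. pose proof PI8b.
  assert (sin (2*w) <= PI - 2*w).
  { rewrite <- (sin_PI_x (2*w)). apply sin_le_id. lra. }
  pose proof (sin_ge_cubic w ltac:(lra)).
  assert (0 <= w - w^3/6) by nra.
  assert ((w - w^3/6)^2 <= (sin w)^2) by (apply pow_incr; lra).
  assert (0 <= w^5) by (apply pow_le; lra).
  apply Rle_trans with (192*(945/100 - 4*w)*w^5).
  { apply Rmult_le_compat_r; auto. lra. }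
  apply Rle_trans with (w^2 * (9000*(1 - w^2/6)^2)).
  { replace (192*(945/100 - 4*w)*w^5) with (w^2 * (192*(945/100 - 4*w)*w^3)) by field.
    apply Rmult_le_compat_l. nra. apply P4. lra. }
  replace (w^2 * (9000*(1 - w^2/6)^2)) with (9000 * (w - w^3/6)^2) by field.
  apply Rmult_le_compat; nra.
Qed.

Lemma T5piece (a b w : R) : 0 < a -> a <= w <= b -> w < PI/2 ->
  768*(1 + (315/100 - a)*(1575/1000 - a))*b^5 <= 9200*(a - a^3/6 + a^5/120 - a^7/5040)^2 ->
  0 <= a - a^3/6 + a^5/120 - a^7/5040 ->
  768*(sin w + (PI - w)*cos w)*w^5 <= PI^8*(sin w)^2.
Proof. intros Ha Hw Hw2 Hn Hp. pose proof PI_hi. pose proof PI_RGT_0. pose proof PI8b.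
  pose proof (sin_le_id (PI/2 - w) ltac:(lra)) as Hc. rewrite sin_shift in Hc.
  pose proof (cos_ge_0 w ltac:(lra) ltac:(lra)).
  pose proof (proj2 (SIN_bound w)).
  pose proof (proj1 (SIN a ltac:(lra) ltac:(lra))) as HS1. rewrite sinlb in HS1.
  pose proof (sin_incr_1 a w ltac:(lra) ltac:(lra) ltac:(lra) ltac:(lra) ltac:(lra)).
  assert ((PI - w)*cos w <= (315/100 - a)*(1575/1000 - a)) by (apply Rmult_le_compat; lra).
  assert (w^5 <= b^5) by (apply pow_incr; lra).
  assert (0 <= w^5) by (apply pow_le; lra).
  apply Rle_trans with (768*(1 + (315/100 - a)*(1575/1000 - a))*b^5).
  { apply Rmult_le_compat; try nra. }
  apply Rle_trans with (9200*(a - a^3/6 + a^5/120 - a^7/5040)^2); auto.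
  apply Rmult_le_compat. lra. nra. lra. apply pow_incr; lra.
Qed.

Lemma T5 (w : R) : 0 < w < PI/2 -> 768*(sin w + (PI - w)*cos w)*w^5 <= PI^8*(sin w)^2.
Proof. intros. pose proof PI_hi. pose proof PI_RGT_0. pose proof PI8b.
  destruct (Rle_lt_dec w (108/100)).
  - pose proof (sin_le_id (PI/2 - w) ltac:(lra)) as Hc. rewrite sin_shift in Hc.
    pose proof (cos_ge_0 w ltac:(lra) ltac:(lra)).
    pose proof (proj2 (SIN_bound w)).
    pose proof (sin_ge_cubic w ltac:(lra)).
    assert ((PI - w)*cos w <= (315/100)*(1575/1000)) by (apply Rmult_le_compat; lra).
    assert (0 <= w^2) by nra.
    assert (w^3 <= (108/100)^3) by (apply pow_incr; lra).
    assert (w*(1 - (108/100)^2/6) <= sin w) by nra.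
    assert (0 <= w*(1 - (108/100)^2/6)) by nra.
    apply Rle_trans with (w^2 * (768*(1 + (315/100)*(1575/1000))*(108/100)^3)).
    { replace (768*(sin w + (PI - w)*cos w)*w^5) with (w^2 * (768*(sin w + (PI - w)*cos w)*w^3)) by field.
      apply Rmult_le_compat_l; auto. apply Rmult_le_compat; try nra. }
    apply Rle_trans with (9200 * (w*(1 - (108/100)^2/6))^2).
    { replace (9200 * (w*(1 - (108/100)^2/6))^2) with (w^2 * (9200 * (1 - (108/100)^2/6)^2)) by field.
      apply Rmult_le_compat_l; auto. lra. }
    apply Rmult_le_compat; try lra; try nra; apply pow_incr; lra.
  - destruct (Rle_lt_dec w (134/100)).
    { apply (T5piece (108/100) (134/100)); lra. }
    destruct (Rle_lt_dec w (151/100)).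
    { apply (T5piece (134/100) (151/100)); lra. }
    apply (T5piece (151/100) (1575/1000)); lra.
Qed.

Definition F (v d : R) : R :=
  ((v + 1) * (d - sin d) + 2 * sqrt v * (2 * sin (d / 2) - d * cos (d / 2)))
       / (2 * (sin (d / 2)) ^ 2).

Lemma f_F (v d : R) : d <> 0 -> f v d = F v d.
Proof. intros. unfold f, F. destruct (Req_EM_T d 0); [contradiction|reflexivity]. Qed.

Lemma div_le (N D K : R) : 0 < D -> N <= K*D -> N/D <= K.
Proof. intros. apply (Rmult_le_reg_r D); auto. unfold Rdiv. rewrite Rmult_assoc, Rinv_l; lra. Qed.
Lemma lt_div (N D K : R) : 0 < D -> K*D < N -> K < N/D.
Proof. intros. apply (Rmult_lt_reg_r D); auto. unfold Rdiv. rewrite Rmult_assoc, Rinv_l; lra. Qed.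

Lemma L1 (v d : R) : 0 <= v -> 0 < d <= PI -> F v d <= PI^2*(v+sqrt v+1)*d/12.
Proof. intros Hv Hd. pose proof (sqrt_pos v).
  set (t := d/2). replace d with (2*t) by (unfold t; field).
  assert (Ht : 0 < t <= PI/2) by (unfold t; lra).
  unfold F. replace (2*t/2) with t by field. rewrite sin_2a.
  pose proof (T1 t Ht) as H1. rewrite sin_2a in H1. pose proof (T2 t Ht) as H2.
  assert (0 < sin t) by (apply sin_gt_0; pose proof PI_RGT_0; lra).
  apply div_le. nra.
  assert (E1 : (v+1)*(3*(2*t - 2*sin t*cos t)) <= (v+1)*(PI^2*t*(sin t)^2)) by (apply Rmult_le_compat_l; lra).
  assert (E2 : sqrt v*(12*(sin t - t*cos t)) <= sqrt v*(PI^2*t*(sin t)^2)) by (apply Rmult_le_compat_l; lra).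
  nra.
Qed.

Lemma L2 (v d : R) : 0 <= v -> PI < d < 2*PI -> F v d <= PI^8*(v+sqrt v+1)/(12*(2*PI-d)^5).
Proof. intros Hv Hd. pose proof (sqrt_pos v).
  set (w := (2*PI - d)/2). replace d with (2*PI - 2*w) by (unfold w; field).
  assert (Hw : 0 < w < PI/2) by (unfold w; lra).
  unfold F. replace ((2*PI - 2*w)/2) with (PI - w) by field.
  replace (sin (2*PI - 2*w)) with (- sin (2*w)).
  2:{ replace (2*PI - 2*w) with (2*(PI - w)) by ring. rewrite !sin_2a, sin_PI_x, Rtrigo_facts.cos_pi_minus. ring. }
  rewrite sin_PI_x, Rtrigo_facts.cos_pi_minus.
  replace (2 * PI - (2 * PI - 2 * w)) with (2*w) by ring.
  pose proof (T4 w Hw) as H1. pose proof (T5 w Hw) as H2.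
  assert (0 < sin w) by (apply sin_gt_0; pose proof PI_RGT_0; lra).
  assert (0 < w^5) by (apply pow_lt; lra).
  apply div_le. nra.
  replace ((2*w)^5) with (32*w^5) by ring.
  apply (Rmult_le_reg_r (384*w^5)). nra.
  replace (PI ^ 8 * (v + sqrt v + 1) / (12 * (32 * w ^ 5)) * (2 * sin w ^ 2) * (384 * w ^ 5))
    with (2*PI^8*(v + sqrt v + 1)*sin w^2) by (field; lra).
  assert (E1 : (v+1)*(192*(2*PI - 2*w + sin(2*w))*w^5) <= (v+1)*(PI^8*(sin w)^2)) by (apply Rmult_le_compat_l; lra).
  assert (E2 : sqrt v*(768*(sin w + (PI - w)*cos w)*w^5) <= sqrt v*(PI^8*(sin w)^2)) by (apply Rmult_le_compat_l; lra).
  nra.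
Qed.

Lemma Lneg (v d : R) : 0 <= v -> -2*PI < d < 0 -> F v d <= 0.
Proof. intros Hv Hd. pose proof (sqrt_pos v).
  set (t := -d/2). replace d with (-(2*t)) by (unfold t; field).
  assert (Ht : 0 < t < PI) by (unfold t; lra).
  unfold F. replace (-(2*t)/2) with (-t) by field.
  rewrite sin_neg, cos_neg, !sin_neg.
  pose proof (sin_le_id (2*t) ltac:(lra)).
  pose proof (T3' t Ht).
  assert (0 < sin t) by (apply sin_gt_0; lra).
  apply div_le. nra.
  assert (E1 : 0 <= (v+1)*(2*t - sin (2*t))) by (apply Rmult_le_pos; lra).
  assert (E2 : 0 <= sqrt v*(sin t - t*cos t)) by (apply Rmult_le_pos; lra).
  nra.
Qed.

Lemma Lbig (v x w : R) : 0 <= v -> 0 < w <= 1/2 -> 0 < x -> 2*w^2*x < PI -> x < F v (2*PI - 2*w).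
Proof. intros Hv Hw Hx Hwx. pose proof (sqrt_pos v). pose proof PI_lo.
  assert (Hw' : 0 < w < PI/2) by lra.
  unfold F. replace ((2*PI - 2*w)/2) with (PI - w) by field.
  replace (sin (2*PI - 2*w)) with (- sin (2*w)).
  2:{ replace (2*PI - 2*w) with (2*(PI - w)) by ring. rewrite !sin_2a, sin_PI_x, Rtrigo_facts.cos_pi_minus. ring. }
  rewrite sin_PI_x, Rtrigo_facts.cos_pi_minus.
  assert (0 < sin w) by (apply sin_gt_0; lra).
  pose proof (sin_le_id w ltac:(lra)).
  pose proof (sin_ge_0 (2*w) ltac:(lra) ltac:(lra)).
  pose proof (cos_ge_0 w ltac:(lra) ltac:(lra)).
  apply lt_div. nra.
  assert (E1 : 0 <= sqrt v*(2 * sin w - (2*PI - 2*w) * - cos w)) by (apply Rmult_le_pos; nra).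
  assert (E2 : 2*PI - 2*w <= (v+1)*(2*PI - 2*w - - sin (2*w))) by nra.
  assert (x * (2 * sin w ^ 2) <= x * (2*w^2)) by (apply Rmult_le_compat_l; nra).
  nra.
Qed.
From Coquelicot Require Import Coquelicot.
Open Scope R_scope.

Lemma F_cont (v a : R) : 0 < a < 2*PI -> continuity_pt (F v) a.
Proof. intros. apply continuity_pt_filterlim. apply (ex_derive_continuous (K:=R_AbsRing) (V:=R_NormedModule) (F v) a).
  unfold F. auto_derive.
  assert (0 < sin (a */ 2)) by (apply sin_gt_0; lra). nra.
Qed.

Lemma exists_sol (x v : R) : 0 < x -> 0 <= v -> exists d, -2*PI < d < 2*PI /\ f v d = x.
Proof. intros Hx Hv. pose proof (sqrt_pos v). pose proof PI_lo. pose proof PI2b.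
  set (s := v + sqrt v + 1). assert (Hs : 1 <= s) by (unfold s; lra).
  set (d0 := Rmin 1 (6*x/(PI^2*s))).
  assert (Hd0 : 0 < d0 <= 1).
  { unfold d0. split. apply Rmin_pos. lra. apply Rdiv_lt_0_compat; nra. apply Rmin_l. }
  assert (Hd0' : d0 * (PI^2*s) <= 6*x).
  { assert (d0 <= 6*x/(PI^2*s)) by apply Rmin_r.
    apply Rmult_le_compat_r with (r := PI^2*s) in H2; [|nra].
    replace (6*x/(PI^2*s)*(PI^2*s)) with (6*x) in H2 by (field; nra). lra. }
  set (w := Rmin (1/2) (PI/(4*x))).
  assert (Hw : 0 < w <= 1/2).
  { unfold w. split. apply Rmin_pos. lra. apply Rdiv_lt_0_compat; lra. apply Rmin_l. }
  assert (Hw' : w * (4*x) <= PI).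
  { assert (w <= PI/(4*x)) by apply Rmin_r.
    apply Rmult_le_compat_r with (r := 4*x) in H2; [|lra].
    replace (PI/(4*x)*(4*x)) with PI in H2 by (field; lra). lra. }
  assert (Hbig : x < F v (2*PI - 2*w)) by (apply Lbig; auto; nra).
  assert (Hsmall : F v d0 < x).
  { pose proof (L1 v d0 Hv ltac:(lra)). fold s in H2. nra. }
  destruct (Ranalysis5.IVT_interv (fun d => F v d - x) d0 (2*PI - 2*w)) as [z [Hz Hfz]].
  - intros a Ha. apply continuity_pt_minus. apply F_cont. lra. apply continuity_pt_const. intros ? ?; auto.
  - lra.
  - lra.
  - lra.
  - exists z. split. lra. rewrite f_F by lra. lra.
Qed.

Theorem lemma2p4 (x v : R) (hx : 0 < x) (hv : 0 <= v) :
  h x v <= delta x v.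
Proof.
  pose proof (epsilon_spec (inhabits 0) (fun d => -2 * PI < d < 2 * PI /\ f v d = x) (exists_sol x v hx hv)) as Hd.
  fold (delta x v) in Hd. set (D := delta x v) in *. destruct Hd as [HD HfD].
  pose proof (sqrt_pos v). pose proof PI_lo. pose proof PI_RGT_0.
  assert (Hs : 1 <= v + sqrt v + 1) by lra.
  apply Rnot_lt_le. intro Hlt.
  assert (Hfx : f v D < x).
  2:{ lra. }
  destruct (Rtotal_order D 0) as [Hn|[Hz0|Hp]].
  - rewrite f_F by lra. pose proof (Lneg v D hv ltac:(lra)). lra.
  - rewrite Hz0. unfold f. destruct (Req_EM_T 0 0); [lra|congruence].
  - rewrite f_F by lra. unfold h in Hlt.
    destruct (Rle_dec x (PI ^ 3 / 12 * (v + sqrt v + 1))) as [c1|c2].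
    + assert (Hh : 12 * x / (PI ^ 2 * (v + sqrt v + 1)) <= PI).
      { apply div_le. nra. nra. }
      pose proof (L1 v D hv ltac:(lra)).
      assert (D * (PI^2*(v + sqrt v + 1)) < 12*x).
      { apply Rmult_lt_compat_r with (r := PI^2*(v + sqrt v + 1)) in Hlt; [|nra].
        replace (12 * x / (PI ^ 2 * (v + sqrt v + 1)) * (PI ^ 2 * (v + sqrt v + 1))) with (12*x) in Hlt by (field; nra). lra. }
      nra.
    + apply Rnot_le_lt in c2.
      destruct (Rle_lt_dec D PI).
      * pose proof (L1 v D hv ltac:(lra)). nra.
      * set (y := PI ^ 8 * (v + sqrt v + 1) / (12 * x)) in *.
        assert (Hy : 0 < y) by (unfold y; apply Rdiv_lt_0_compat; [apply Rmult_lt_0_compat; [apply pow_lt|]|]; lra).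
        set (e := Rpower y (1/5)) in *.
        assert (He : 0 < e) by (unfold e, Rpower; apply exp_pos).
        assert (He5 : e^5 = y).
        { rewrite <- (Rpower_pow 5 e He). unfold e. rewrite Rpower_mult.
          replace (1/5 * INR 5) with 1 by (simpl; field). apply Rpower_1; auto. }
        assert (HDlt : D < 2*PI) by lra.
        pose proof (L2 v D hv ltac:(lra)) as HL.
        set (u := 2*PI - D) in *.
        assert (Hue : e < u) by (unfold u; lra).
        assert (Hu5 : e^5 < u^5).
        { apply Rle_lt_trans with (e^4*u). 
          - replace (e^5) with (e^4*e) by ring. apply Rmult_le_compat_l. apply pow_le; lra. lra.
          - replace (u^5) with (u^4*u) by ring. apply Rmult_lt_compat_r. lra.
            assert (e^4 <= u^4) by (apply pow_incr; lra).
            assert (e^4 < u^4).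
            { replace (e^4) with (e^3*e) by ring. replace (u^4) with (u^3*u) by ring.
              assert (e^3 <= u^3) by (apply pow_incr; lra).
              apply Rle_lt_trans with (u^3*e). apply Rmult_le_compat_r; lra.
              apply Rmult_lt_compat_l. apply pow_lt; lra. lra. }
            lra. }
        assert (PI ^ 8 * (v + sqrt v + 1) / (12 * u ^ 5) < x).
        { assert (Hx12 : 12*x*e^5 = PI ^ 8 * (v + sqrt v + 1)).
          { rewrite He5. unfold y. field. lra. }
          apply Rmult_lt_reg_r with (12*u^5). assert (0 < u^5) by (apply pow_lt; lra). lra.
          replace (PI ^ 8 * (v + sqrt v + 1) / (12 * u ^ 5) * (12 * u ^ 5)) with (PI ^ 8 * (v + sqrt v + 1))
            by (field; lra).
          rewrite <- Hx12. nra. }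
        lra.
Qed.
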